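(* Let $F\subseteq\mathbf I$ be finite with $\emptyset\notin F$, and set $f=\sum_{\mathbf i\in F}\delta_{s_{\mathbf i}^*}\in\mathcal A$. Then $\|\pi_{\mathcal J}(f)\|=|F|$ (quotient norm in $\mathcal A/\mathcal J$).
   Context: Let $\mathrm{Cu}_2$ be the involutive monoid with identity $e$ and zero element $\lozenge$ (so $\lozenge t=\lozenge=t\lozenge$ for all $t$), generated by $s_1,s_2,s_1^*,s_2^*$ subject to $s_1^*s_1=e=s_2^*s_2$ and $s_1^*s_2=\lozenge=s_2^*s_1$, with involution $t\mapsto t^*$ satisfying $(t^* )^*=t$, $(tu)^*=u^*t^*$. Let $\mathbf I_0=\{\emptyset\}$, $\mathbf I_n=\{1,2\}^n$, $\mathbf I=\bigcup_{n\ge0}\mathbf I_n$ (finite words). For $\mathbf i=(i_1,\dots,i_k)\in\mathbf I$ put $s_{\mathbf i}=s_{i_1}\cdots s_{i_k}$ ($s_\emptyset=e$) and $s_{\mathbf i}^*=(s_{\mathbf i})^*$. Let $\mathcal A=\ell^1(\mathrm{Cu}_2\setminus\{\lozenge\})$ with product $\#$ determined by bilinearity and continuity from $\delta_s\#\delta_t=\delta_{st}$ if $st\neq\lozenge$ and $\delta_s\#\delta_t=0$ if $st=\lozenge$. Let $f_0=\delta_e-\delta_{s_1s_1^*}-\delta_{s_2s_2^*}$, let $\mathcal J$ be the closed two-sided ideal of $\mathcal A$ generated by $f_0$, and let $\pi_{\mathcal J}:\mathcal A\to\mathcal A/\mathcal J$ be the quotient map. *)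

(* Defs.v *)
From HB Require Import structures.
From mathcomp Require Import all_boot all_order all_algebra.
From mathcomp Require Import all_classical all_reals.
From mathcomp Require Import topology normedtype sequences esum.
From mathcomp Require Import complex.
Set Implicit Arguments. Unset Strict Implicit. Unset Printing Implicit Defensive.
Import Order.TTheory GRing.Theory Num.Theory.
Local Open Scope classical_set_scope.
Local Open Scope ring_scope.

(* Words over the alphabet {1,2}: the letter 1 is encoded by [false],
   the letter 2 by [true]. *)
Definition word := seq bool.

(* Nonzero elements of Cu_2 in normal form: (mu, nu) stands for s_mu s_nu^*. *)
Definition cu2 := (word * word)%type.

(* Product in Cu_2 \ {lozenge}; [None] means the product is the zero element.
   ( s_mu s_nu^* ) ( s_al s_be^* ) = s_(mu ga) s_be^*     if al = nu ga,
                                   = s_mu ( s_(be ga) )^* if nu = al ga,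
                                   = lozenge              otherwise. *)
Definition cu2_mul (x y : cu2) : option cu2 :=
  let: (mu, nu) := x in let: (al, be) := y in
  if prefix nu al then Some (mu ++ drop (size nu) al, be)
  else if prefix al nu then Some (mu, be ++ drop (size al) nu)
  else None.

Definition cu2_e : cu2 := ([::], [::]).
Definition cu2_sstar (w : word) : cu2 := ([::], w).
Definition cu2_proj (w : word) : cu2 := (w, w).

Section L1.
Variable R : realType.
Local Notation C := R[i].

Definition rsum (T : choiceType) (D : set T) (u : T -> R) : R :=
  fine (\esum_(x in D) (Num.max (u x) 0)%:E)%E
  - fine (\esum_(x in D) (Num.max (- u x) 0)%:E)%E.

Definition csum (T : choiceType) (D : set T) (u : T -> C) : C :=
  Complex (rsum D (fun x => complex.Re (u x))) (rsum D (fun x => complex.Im (u x))).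

Definition l1 (a : cu2 -> C) : Prop :=
  (\esum_(x in [set: cu2]) (Normc.normc (a x))%:E < +oo)%E.

Definition l1norm (a : cu2 -> C) : R :=
  fine (\esum_(x in [set: cu2]) (Normc.normc (a x))%:E)%E.

Definition delta (s : cu2) : cu2 -> C := fun t => (t == s)%:R.

Definition conv (a b : cu2 -> C) : cu2 -> C := fun z =>
  csum [set p : cu2 * cu2 | cu2_mul p.1 p.2 = Some z] (fun p => a p.1 * b p.2).

Definition closed_ideal (I : set (cu2 -> C)) : Prop :=
  [/\ I `<=` l1,
      I (fun _ => 0) /\
      (forall g h, I g -> I h -> I (fun t => g t + h t)),
      (forall (c : C) g, I g -> I (fun t => c * g t)),
      (forall a g, l1 a -> I g -> I (conv a g) /\ I (conv g a))
    & (forall a, l1 a ->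
         (forall eps : R, 0 < eps -> exists2 g, I g & l1norm (fun t => a t - g t) < eps) ->
         I a)].

Definition f0 : cu2 -> C := fun t =>
  delta cu2_e t - delta (cu2_proj [:: false]) t - delta (cu2_proj [:: true]) t.

Definition Jideal : set (cu2 -> C) :=
  [set g | forall I, closed_ideal I -> I f0 -> I g].

Definition quot_norm (a : cu2 -> C) : R :=
  inf [set l1norm (fun t => a t - g t) | g in Jideal].

End L1.

(* Main.v *)
Require Import Defs.
From HB Require Import structures.
From mathcomp Require Import all_boot all_order all_algebra.
From mathcomp Require Import all_classical all_reals.
From mathcomp Require Import topology normedtype sequences esum.
From mathcomp Require Import complex.
From mathcomp Require Import ring lra ereal zify.
Import Order.TTheory GRing.Theory Num.Theory.
Local Open Scope ring_scope.
Set Implicit Arguments. Unset Strict Implicit. Unset Printing Implicit Defensive.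
Local Open Scope classical_set_scope.
Local Open Scope ring_scope.

Section RS.
Variables (R : realType) (T : choiceType).
Implicit Types (D : set T) (u v : T -> R).

Definition sumbl D u := (\esum_(x in D) (`|u x|)%:E < +oo)%E.

Lemma esum_fin_bound D (e : T -> R) (b : T -> R) :
  (forall x, D x -> 0 <= e x <= b x) -> (\esum_(x in D) (b x)%:E < +oo)%E ->
  (\esum_(x in D) (e x)%:E)%E \is a fin_num.
Proof.
move=> h hb; rewrite ge0_fin_numE; last first.
  by apply: esum_ge0 => x Dx; rewrite lee_fin; case/andP: (h x Dx).
apply: le_lt_trans hb; apply: le_esum => x Dx; rewrite lee_fin.
by case/andP: (h x Dx).
Qed.

Lemma pos_ge0 (r : R) : 0 <= Num.max r 0. Proof. by rewrite le_max lexx orbT. Qed.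
Lemma pos_le (r : R) : Num.max r 0 <= `|r|.
Proof. by rewrite ge_max normr_ge0 ler_norm. Qed.
Lemma neg_le (r : R) : Num.max (- r) 0 <= `|r|.
Proof. by rewrite ge_max normr_ge0 -normrN ler_norm. Qed.
Lemma posneg (r : R) : Num.max r 0 - Num.max (- r) 0 = r.
Proof.
case: (boolP (0 <= r)) => h.
  by rewrite (max_l h) max_r ?subr0 // oppr_le0.
rewrite -ltNge in h.
by rewrite (max_r (ltW h)) max_l ?sub0r ?opprK // oppr_ge0 ltW.
Qed.
Lemma posnegD (r : R) : Num.max r 0 + Num.max (- r) 0 = `|r|.
Proof.
case: (boolP (0 <= r)) => h.
  by rewrite (max_l h) max_r ?addr0 ?ger0_norm // oppr_le0.
rewrite -ltNge in h.
by rewrite (max_r (ltW h)) max_l ?add0r ?ltr0_norm // oppr_ge0 ltW.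
Qed.

Lemma sumbl_pos D u : sumbl D u ->
  (\esum_(x in D) (Num.max (u x) 0)%:E)%E \is a fin_num.
Proof. by move=> h; apply: esum_fin_bound h => x _; rewrite pos_ge0 pos_le. Qed.
Lemma sumbl_neg D u : sumbl D u ->
  (\esum_(x in D) (Num.max (- u x) 0)%:E)%E \is a fin_num.
Proof. by move=> h; apply: esum_fin_bound h => x _; rewrite pos_ge0 neg_le. Qed.

Lemma sumbl_le D u v : (forall x, D x -> `|u x| <= `|v x|) -> sumbl D v -> sumbl D u.
Proof.
move=> h hv; apply: le_lt_trans hv; apply: le_esum => x Dx; rewrite lee_fin; exact: h.
Qed.

Lemma rsum_repr D u (p q : T -> R) :
  (forall x, D x -> 0 <= p x) -> (forall x, D x -> 0 <= q x) ->
  sumbl D p -> sumbl D q -> (forall x, D x -> u x = p x - q x) ->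
  rsum D u = fine (\esum_(x in D) (p x)%:E)%E - fine (\esum_(x in D) (q x)%:E)%E.
Proof.
move=> p0 q0 sp sq e.
have fp : (\esum_(x in D) (p x)%:E)%E \is a fin_num.
  by apply: esum_fin_bound sp => x Dx; rewrite p0 // ler_norm.
have fq : (\esum_(x in D) (q x)%:E)%E \is a fin_num.
  by apply: esum_fin_bound sq => x Dx; rewrite q0 // ler_norm.
have su : sumbl D u.
  apply: le_lt_trans (_ : (\esum_(x in D) (p x + q x)%:E < +oo)%E).
    apply: le_esum => x Dx; rewrite lee_fin e // (le_trans (ler_normB _ _)) //.
    by rewrite !ger0_norm ?p0 ?q0.
  rewrite (eq_esum (b := fun x => ((p x)%:E + (q x)%:E)%E)); last by move=> x _; rewrite EFinD.
  rewrite esumD; last 2 first.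
  - by move=> x Dx; rewrite lee_fin p0.
  - by move=> x Dx; rewrite lee_fin q0.
  rewrite -ge0_fin_numE; first by rewrite fin_numD fp fq.
  by apply: adde_ge0; apply: esum_ge0 => x Dx; rewrite lee_fin ?p0 ?q0.
have key : (\esum_(x in D) (Num.max (u x) 0)%:E + \esum_(x in D) (q x)%:E =
            \esum_(x in D) (Num.max (- u x) 0)%:E + \esum_(x in D) (p x)%:E)%E.
  rewrite -!esumD; last 4 first.
  1-4: by move=> x Dx; rewrite lee_fin ?pos_ge0 ?p0 ?q0.
  apply: eq_esum => x Dx; rewrite -!EFinD; congr (_%:E).
  have := posneg (u x); rewrite e // => h.
  lra.
have fa := sumbl_pos su; have fb := sumbl_neg su.
have := congr1 fine key; rewrite !fineD // => h.
rewrite /rsum; lra.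
Qed.


Lemma esumZ D (a : T -> R) (r : R) : (forall x, 0 <= a x) -> 0 <= r ->
  (\esum_(x in D) (r * a x)%:E = r%:E * \esum_(x in D) (a x)%:E)%E.
Proof.
move=> a0 r0; rewrite /esum -ereal_supZl //; last first.
  by apply/set0P; exists 0%E; exists set0; [exact: fsets_set0|rewrite fsbig_set0].
congr ereal_sup; apply/seteqP; split=> y /=.
  case=> A hA <-; exists (\sum_(x \in A) (a x)%:E)%E; first by exists A.
  by rewrite ge0_mule_fsumr // => i; rewrite lee_fin.
case=> z [A hA <-] <-; exists A => //.
by rewrite ge0_mule_fsumr // => i; rewrite lee_fin.
Qed.

Lemma esum_fin D (a : T -> R) : (forall x, D x -> 0 <= a x) ->
  (\esum_(x in D) (a x)%:E < +oo)%E ->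
  (fine (\esum_(x in D) (a x)%:E))%:E = (\esum_(x in D) (a x)%:E)%E.
Proof.
move=> a0 h; rewrite fineK // ge0_fin_numE // esum_ge0 // => x Dx; rewrite lee_fin a0.
Qed.

Lemma esum0 D : (\esum_(x in D) (0:R)%:E = 0)%E.
Proof. by rewrite esum1. Qed.

Lemma sumbl0 D : sumbl D (fun _ => 0).
Proof. by rewrite /sumbl (eq_esum (b := fun _ => 0%E)) ?esum0 // => x _; rewrite normr0. Qed.

Lemma rsum_ext D u v : (forall x, D x -> u x = v x) -> rsum D u = rsum D v.
Proof.
move=> e; rewrite /rsum; congr (fine _ - fine _); apply: eq_esum => x Dx; by rewrite e.
Qed.

Lemma rsum_nneg D u : (forall x, D x -> 0 <= u x) -> sumbl D u ->
  rsum D u = fine (\esum_(x in D) (u x)%:E)%E.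
Proof.
move=> u0 su.
have s1 : sumbl D u by [].
have s0 := sumbl0 D.
have := @rsum_repr D u u (fun _ => 0) u0 (fun x _ => lexx 0) s1 s0.
rewrite esum0 subr0 => ->//.
by move=> x _; rewrite subr0.
Qed.

Lemma rsum0 D : rsum D (fun _ => 0 : R) = 0.
Proof. by rewrite rsum_nneg ?esum0 //; [exact: sumbl0]. Qed.

Lemma sumblD D u v : sumbl D u -> sumbl D v -> sumbl D (fun x => u x + v x).
Proof.
move=> su sv; rewrite /sumbl.
apply: le_lt_trans (_ : (\esum_(x in D) ((`|u x|)%:E + (`|v x|)%:E) < +oo)%E).
  by apply: le_esum => x _; rewrite -EFinD lee_fin ler_normD.
rewrite esumD; try by move=> x _; rewrite lee_fin.
by apply: lte_add_pinfty.
Qed.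

Lemma sumblZ D u c : sumbl D u -> sumbl D (fun x => c * u x).
Proof.
move=> su; rewrite /sumbl (eq_esum (b := fun x => (`|c| * `|u x|)%:E)); last first.
  by move=> x _; rewrite normrM.
rewrite esumZ; last 2 first.
- by move=> x; rewrite normr_ge0.
- by rewrite normr_ge0.
by apply: lte_mul_pinfty => //; rewrite lee_fin normr_ge0.
Qed.

Lemma rsum_add D u v : sumbl D u -> sumbl D v ->
  rsum D (fun x => u x + v x) = rsum D u + rsum D v.
Proof.
move=> su sv.
have fpu := sumbl_pos su; have fnu := sumbl_neg su.
have fpv := sumbl_pos sv; have fnv := sumbl_neg sv.
rewrite (@rsum_repr D _ (fun x => Num.max (u x) 0 + Num.max (v x) 0)
                        (fun x => Num.max (- u x) 0 + Num.max (- v x) 0)).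
- rewrite /rsum (eq_esum (b := fun x => ((Num.max (u x) 0)%:E + (Num.max (v x) 0)%:E)%E)); last by move=> *; rewrite EFinD.
  rewrite (eq_esum (I := D) (a := fun x => (Num.max (- u x) 0 + Num.max (- v x) 0)%:E)
     (b := fun x => ((Num.max (- u x) 0)%:E + (Num.max (- v x) 0)%:E)%E)); last by move=> *; rewrite EFinD.
  rewrite !esumD; try by move=> *; rewrite lee_fin pos_ge0.
  rewrite !fineD //; lra.
- by move=> x _; rewrite addr_ge0 ?pos_ge0.
- by move=> x _; rewrite addr_ge0 ?pos_ge0.
- by apply: sumblD; [apply: sumbl_le su|apply: sumbl_le sv] => x _; rewrite ger0_norm ?pos_ge0 ?pos_le.
- by apply: sumblD; [apply: sumbl_le su|apply: sumbl_le sv] => x _; rewrite ger0_norm ?pos_ge0 ?neg_le.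
- by move=> x _; have := posneg (u x); have := posneg (v x); lra.
Qed.

Lemma rsum_scale D u c : sumbl D u -> rsum D (fun x => c * u x) = c * rsum D u.
Proof.
move=> su.
have fpu := sumbl_pos su; have fnu := sumbl_neg su.
have spu : sumbl D (fun x => Num.max (u x) 0).
  by apply: sumbl_le su => x _; rewrite ger0_norm ?pos_ge0 ?pos_le.
have snu : sumbl D (fun x => Num.max (- u x) 0).
  by apply: sumbl_le su => x _; rewrite ger0_norm ?pos_ge0 ?neg_le.
case: (boolP (0 <= c)) => c0.
  rewrite (@rsum_repr D _ (fun x => c * Num.max (u x) 0) (fun x => c * Num.max (- u x) 0)).
  - rewrite !esumZ //; try by move=> x; rewrite pos_ge0.
    by rewrite !fineM // /rsum /=; ring.
  - by move=> x _; rewrite mulr_ge0 ?pos_ge0.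
  - by move=> x _; rewrite mulr_ge0 ?pos_ge0.
  - exact: sumblZ.
  - exact: sumblZ.
  - by move=> x _; rewrite -mulrBr posneg.
rewrite -ltNge in c0.
rewrite (@rsum_repr D _ (fun x => (- c) * Num.max (- u x) 0) (fun x => (- c) * Num.max (u x) 0)).
- rewrite !esumZ //; try by move=> x; rewrite pos_ge0.
  + by rewrite !fineM // /rsum /=; ring.
  + by rewrite oppr_ge0 ltW.
  + by rewrite oppr_ge0 ltW.
- by move=> x _; rewrite mulr_ge0 ?pos_ge0 // oppr_ge0 ltW.
- by move=> x _; rewrite mulr_ge0 ?pos_ge0 // oppr_ge0 ltW.
- exact: sumblZ.
- exact: sumblZ.
- by move=> x _; rewrite -[in LHS](posneg (u x)); ring.
Qed.

Lemma rsum_abs D u : sumbl D u -> `|rsum D u| <= fine (\esum_(x in D) (`|u x|)%:E)%E.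
Proof.
move=> su; have fpu := sumbl_pos su; have fnu := sumbl_neg su.
rewrite (eq_esum (b := fun x => ((Num.max (u x) 0)%:E + (Num.max (- u x) 0)%:E)%E)); last first.
  by move=> x _; rewrite -EFinD posnegD.
rewrite esumD; try by move=> *; rewrite lee_fin pos_ge0.
rewrite fineD // /rsum.
have h1 : 0 <= fine (\esum_(x in D) (Num.max (u x) 0)%:E)%E.
  by rewrite fine_ge0 // esum_ge0 // => *; rewrite lee_fin pos_ge0.
have h2 : 0 <= fine (\esum_(x in D) (Num.max (- u x) 0)%:E)%E.
  by rewrite fine_ge0 // esum_ge0 // => *; rewrite lee_fin pos_ge0.
rewrite ler_norml; apply/andP; split; lra.
Qed.


Lemma fin_lty (x : \bar R) : x \is a fin_num -> (x < +oo)%E.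
Proof. by move/fin_numPlt/andP => []. Qed.

Lemma esum_sub D E (a : T -> \bar R) : E `<=` D -> (forall x, 0 <= a x)%E ->
  (\esum_(x in E) a x <= \esum_(x in D) a x)%E.
Proof.
move=> ED a0; rewrite (esum_mkcond E) (esum_mkcond D); apply: le_esum => x _.
case: ifP => //; case: ifP => // /negbT; rewrite notin_setE => nD.
by rewrite inE => /ED.
Qed.

Lemma sumbl_sub D E u : E `<=` D -> sumbl D u -> sumbl E u.
Proof.
move=> ED; apply: le_lt_trans; apply: esum_sub => // x; rewrite lee_fin normr_ge0.
Qed.

Lemma rsum_sub D u v : sumbl D u -> sumbl D v ->
  rsum D (fun x => u x - v x) = rsum D u - rsum D v.
Proof.
move=> su sv.
have sv' : sumbl D (fun x => -1 * v x) by apply: sumblZ.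
rewrite (rsum_ext (v := fun x => u x + -1 * v x)); last by move=> x _; ring.
by rewrite rsum_add // rsum_scale //; ring.
Qed.

Lemma rsum_reindex (T' : choiceType) (P : set T') (Q : set T) (e : T' -> T) u :
  set_bij P Q e -> rsum Q u = rsum P (fun x => u (e x)).
Proof.
move=> b; rewrite /rsum (reindex_esum P Q e) //.
by rewrite (reindex_esum P Q e (fun x => (Num.max (- u x) 0)%:E)).
Qed.

End RS.

Section RS2.
Variables (R : realType) (T : choiceType).
Implicit Types (D : set T) (u v : T -> R).

Lemma esum_part (Z : choiceType) D (a : T -> \bar R) (k : T -> Z) :
  (forall x, 0 <= a x)%E ->
  (\esum_(x in D) a x = \esum_(z in [set: Z]) \esum_(x in D `&` (fun x => k x = z)) a x)%E.
Proof.
move=> a0; rewrite (esum_esum (I := [set: Z]) (J := fun z => D `&` (fun x => k x = z))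
  (a := fun _ x => a x)); last by move=> *; apply: a0.
rewrite (reindex_esum D _ (fun x => (k x, x))) //; split.
- by move=> x Dx /=; split => //.
- by move=> x y _ _ [].
- by move=> [z x] /= [_ [Dx <-]]; exists x.
Qed.

Lemma rsum_part (Z : choiceType) D u (k : T -> Z) : sumbl D u ->
  rsum D u = rsum [set: Z] (fun z => rsum (D `&` (fun x => k x = z)) u).
Proof.
move=> su; set Dz := fun z => D `&` (fun x => k x = z).
have fpu := sumbl_pos su; have fnu := sumbl_neg su.
have hpos : forall z, (fine (\esum_(x in Dz z) (Num.max (u x) 0)%:E))%:E =
    (\esum_(x in Dz z) (Num.max (u x) 0)%:E)%E.
  move=> z; rewrite fineK // ge0_fin_numE; last by apply: esum_ge0 => *; rewrite lee_fin pos_ge0.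
  apply: le_lt_trans (@esum_sub R T D (Dz z) _ _ _) _; first by move=> x [].
    by move=> x; rewrite lee_fin pos_ge0.
  exact: fin_lty.
have hneg : forall z, (fine (\esum_(x in Dz z) (Num.max (- u x) 0)%:E))%:E =
    (\esum_(x in Dz z) (Num.max (- u x) 0)%:E)%E.
  move=> z; rewrite fineK // ge0_fin_numE; last by apply: esum_ge0 => *; rewrite lee_fin pos_ge0.
  apply: le_lt_trans (@esum_sub R T D (Dz z) _ _ _) _; first by move=> x [].
    by move=> x; rewrite lee_fin pos_ge0.
  exact: fin_lty.
have Epos : (\esum_(z in [set: Z]) (fine (\esum_(x in Dz z) (Num.max (u x) 0)%:E))%:E
    = \esum_(x in D) (Num.max (u x) 0)%:E)%E.
  by rewrite (esum_part _ k); [apply: eq_esum => z _; rewrite hpos|move=> x; rewrite lee_fin pos_ge0].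
have Eneg : (\esum_(z in [set: Z]) (fine (\esum_(x in Dz z) (Num.max (- u x) 0)%:E))%:E
    = \esum_(x in D) (Num.max (- u x) 0)%:E)%E.
  by rewrite (esum_part _ k); [apply: eq_esum => z _; rewrite hneg|move=> x; rewrite lee_fin pos_ge0].
have g1 : forall z, 0 <= fine (\esum_(x in Dz z) (Num.max (u x) 0)%:E)%E.
  by move=> z; rewrite fine_ge0 // esum_ge0 // => *; rewrite lee_fin pos_ge0.
have g2 : forall z, 0 <= fine (\esum_(x in Dz z) (Num.max (- u x) 0)%:E)%E.
  by move=> z; rewrite fine_ge0 // esum_ge0 // => *; rewrite lee_fin pos_ge0.
rewrite (@rsum_repr R Z [set: Z] _ (fun z => fine (\esum_(x in Dz z) (Num.max (u x) 0)%:E)%E)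
   (fun z => fine (\esum_(x in Dz z) (Num.max (- u x) 0)%:E)%E)).
- by rewrite Epos Eneg.
- by move=> z _; apply: g1.
- by move=> z _; apply: g2.
- rewrite /sumbl (eq_esum (b := fun z => (fine (\esum_(x in Dz z) (Num.max (u x) 0)%:E))%:E)).
    by rewrite Epos; apply: fin_lty.
  by move=> z _; rewrite ger0_norm.
- rewrite /sumbl (eq_esum (b := fun z => (fine (\esum_(x in Dz z) (Num.max (- u x) 0)%:E))%:E)).
    by rewrite Eneg; apply: fin_lty.
  by move=> z _; rewrite ger0_norm.
- by move=> z _.
Qed.

Lemma rsum_mkcond D u : (forall x, ~ D x -> u x = 0) -> rsum D u = rsum [set: T] u.
Proof.
move=> h; rewrite /rsum (esum_mkcond D) (esum_mkcond D (fun x => (Num.max (- u x) 0)%:E)).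
congr (fine _ - fine _); apply: eq_esum => x _; case: ifP => // /negbT;
  rewrite notin_setE => /h ->; rewrite ?oppr0 maxxx //.
Qed.

Lemma sumbl_mkcond D u : (forall x, ~ D x -> u x = 0) -> sumbl D u -> sumbl [set: T] u.
Proof.
move=> h; rewrite /sumbl (esum_mkcond D) => hs; apply: le_lt_trans hs; rewrite le_eqVlt; apply/orP; left; apply/eqP.
apply: eq_esum => x _; case: ifP => // /negbT; rewrite notin_setE => /h ->; by rewrite normr0.
Qed.

Lemma rsum_single u x : (forall t, t != x -> u t = 0) -> rsum [set: T] u = u x.
Proof.
move=> h.
have e : forall (a : T -> \bar R), (forall t, 0 <= a t)%E -> (forall t, t != x -> a t = 0%E) ->
    (\esum_(t in [set: T]) a t = a x)%E.
  move=> a a0 ha; rewrite (esumID [set x]) //.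
  rewrite setTI esum_set1 // esum1 ?adde0 // => t [_ /= tx]; apply: ha; apply/eqP => ex; exact: tx.
rewrite /rsum !e.
- by rewrite /= posneg.
- by move=> t; rewrite lee_fin pos_ge0.
- by move=> t /h ->; rewrite oppr0 maxxx.
- by move=> t; rewrite lee_fin pos_ge0.
- by move=> t /h ->; rewrite maxxx.
Qed.

Lemma sumbl_single u x : (forall t, t != x -> u t = 0) -> sumbl [set: T] u.
Proof.
move=> h; rewrite /sumbl (esumID [set x]); last by move=> *; rewrite lee_fin.
rewrite setTI esum_set1 ?lee_fin // esum1 ?adde0 ?ltry // => t [_ /= tx].
by rewrite h ?normr0 //; apply/eqP => ex; exact: tx.
Qed.

End RS2.
Set Implicit Arguments. Unset Strict Implicit. Unset Printing Implicit Defensive.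
Local Open Scope classical_set_scope.
Local Open Scope ring_scope.

Section CX.
Variable R : realType.
Local Notation C := R[i].
Local Notation normc := (@Normc.normc R).

Lemma cplx_eq (x y : C) : complex.Re x = complex.Re y -> complex.Im x = complex.Im y -> x = y.
Proof. by case: x => a b; case: y => c d /= -> ->. Qed.

Lemma ReD (x y : C) : complex.Re (x + y) = complex.Re x + complex.Re y.
Proof. by case: x => a b; case: y. Qed.
Lemma ImD (x y : C) : complex.Im (x + y) = complex.Im x + complex.Im y.
Proof. by case: x => a b; case: y. Qed.
Lemma ReN (x : C) : complex.Re (- x) = - complex.Re x.
Proof. by case: x. Qed.
Lemma ImN (x : C) : complex.Im (- x) = - complex.Im x.
Proof. by case: x. Qed.
Lemma ReB (x y : C) : complex.Re (x - y) = complex.Re x - complex.Re y.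
Proof. by rewrite ReD ReN. Qed.
Lemma ImB (x y : C) : complex.Im (x - y) = complex.Im x - complex.Im y.
Proof. by rewrite ImD ImN. Qed.
Lemma ReM (x y : C) : complex.Re (x * y) = complex.Re x * complex.Re y - complex.Im x * complex.Im y.
Proof. by case: x => a b; case: y. Qed.
Lemma ImM (x y : C) : complex.Im (x * y) = complex.Re x * complex.Im y + complex.Im x * complex.Re y.
Proof. by case: x => a b; case: y. Qed.
Lemma Re0 : complex.Re (0 : C) = 0. Proof. by []. Qed.
Lemma Im0 : complex.Im (0 : C) = 0. Proof. by []. Qed.
Lemma Re1 : complex.Re (1 : C) = 1. Proof. by []. Qed.
Lemma Im1 : complex.Im (1 : C) = 0. Proof. by []. Qed.

Lemma normc_ge0 (x : C) : 0 <= normc x.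
Proof. by case: x => a b /=; rewrite sqrtr_ge0. Qed.

Lemma Re_le (x : C) : `|complex.Re x| <= normc x.
Proof.
case: x => a b /=; rewrite -sqrtr_sqr ler_wsqrtr // lerDl sqr_ge0 //.
Qed.
Lemma Im_le (x : C) : `|complex.Im x| <= normc x.
Proof.
case: x => a b /=; rewrite -sqrtr_sqr ler_wsqrtr // lerDr sqr_ge0 //.
Qed.
Lemma normc_le (x : C) : normc x <= `|complex.Re x| + `|complex.Im x|.
Proof.
case: x => a b /=.
rewrite -[X in _ <= X](ger0_norm (addr_ge0 (normr_ge0 a) (normr_ge0 b))) -sqrtr_sqr.
rewrite ?ler_wsqrtr // sqrrD !real_normK ?num_real //.
have := mulr_ge0 (normr_ge0 a) (normr_ge0 b); rewrite mulr2n; lra.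
Qed.
End CX.

Section CS.
Variables (R : realType) (T : choiceType).
Local Notation C := R[i].
Local Notation normc := (@Normc.normc R).
Implicit Types (D : set T) (u v : T -> C).

Lemma esum_fin_lt D (a : T -> R) : (forall x, D x -> 0 <= a x) ->
  (\esum_(x in D) (a x)%:E < +oo)%E -> (\esum_(x in D) (a x)%:E)%E \is a fin_num.
Proof.
move=> a0 h.
have g : (0 <= \esum_(x in D) (a x)%:E)%E by apply: esum_ge0 => x Dx; rewrite lee_fin a0.
by rewrite ge0_fin_numE.
Qed.

Definition csumbl D u := (\esum_(x in D) (normc (u x))%:E < +oo)%E.

Lemma csumbl_sumbl D u : csumbl D u -> sumbl D (fun x => normc (u x)).
Proof.
rewrite /csumbl /sumbl => h; rewrite (eq_esum (b := fun x => (normc (u x))%:E)) //.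
by move=> x _; rewrite ger0_norm // normc_ge0.
Qed.

Lemma csumbl_Re D u : csumbl D u -> sumbl D (fun x => complex.Re (u x)).
Proof.
move/csumbl_sumbl; apply: sumbl_le => x _; rewrite (ger0_norm (normc_ge0 _)); exact: Re_le.
Qed.
Lemma csumbl_Im D u : csumbl D u -> sumbl D (fun x => complex.Im (u x)).
Proof.
move/csumbl_sumbl; apply: sumbl_le => x _; rewrite (ger0_norm (normc_ge0 _)); exact: Im_le.
Qed.

Lemma csumbl_le D u v : (forall x, D x -> normc (u x) <= normc (v x)) -> csumbl D v -> csumbl D u.
Proof. by move=> h; apply: le_lt_trans; apply: le_esum => x Dx; rewrite lee_fin h. Qed.

Lemma csumbl_bnd D u (b : T -> R) : (forall x, D x -> normc (u x) <= b x) ->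
  (\esum_(x in D) (b x)%:E < +oo)%E -> csumbl D u.
Proof. by move=> h; apply: le_lt_trans; apply: le_esum => x Dx; rewrite lee_fin h. Qed.

Lemma csumblD D u v : csumbl D u -> csumbl D v -> csumbl D (fun x => u x + v x).
Proof.
move=> su sv; apply: (@csumbl_bnd _ _ (fun x => normc (u x) + normc (v x))).
  by move=> x _; exact: le_normcD.
rewrite (eq_esum (b := fun x => ((normc (u x))%:E + (normc (v x))%:E)%E)); last by move=> *; rewrite EFinD.
by rewrite esumD ?lte_add_pinfty // => *; rewrite lee_fin normc_ge0.
Qed.

Lemma csumblZ D u c : csumbl D u -> csumbl D (fun x => c * u x).
Proof.
move=> su; rewrite /csumbl (eq_esum (b := fun x => (normc c * normc (u x))%:E)); last first.
  by move=> x _; rewrite Normc.normcM.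
rewrite esumZ; last 2 first.
- by move=> x; rewrite normc_ge0.
- by rewrite normc_ge0.
by apply: lte_mul_pinfty => //; rewrite lee_fin normc_ge0.
Qed.

Lemma csumblZr D u c : csumbl D u -> csumbl D (fun x => u x * c).
Proof.
by move=> su; apply: csumbl_le (csumblZ c su) => x _; rewrite mulrC.
Qed.

Lemma csumblN D u : csumbl D u -> csumbl D (fun x => - u x).
Proof. by apply: csumbl_le => x _; rewrite normcN. Qed.

Lemma csumblB D u v : csumbl D u -> csumbl D v -> csumbl D (fun x => u x - v x).
Proof. by move=> su sv; apply: csumblD => //; apply: csumblN. Qed.

Lemma csumbl_sub D E u : E `<=` D -> csumbl D u -> csumbl E u.
Proof.
move=> ED h; apply: le_lt_trans h; apply: esum_sub => //.
by move=> x; rewrite lee_fin normc_ge0.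
Qed.

Lemma csumbl_mkcond D u : (forall x, ~ D x -> u x = 0) -> csumbl D u -> csumbl [set: T] u.
Proof.
move=> h; rewrite /csumbl (esum_mkcond D) => hs; apply: le_lt_trans hs; rewrite le_eqVlt; apply/orP; left; apply/eqP.
apply: eq_esum => x _; case: ifP => // /negbT; rewrite notin_setE => /h ->; by rewrite Normc.normc0.
Qed.

Lemma csumbl_single u x : (forall t, t != x -> u t = 0) -> csumbl [set: T] u.
Proof.
move=> h; rewrite /csumbl (esumID [set x]); last by move=> *; rewrite lee_fin normc_ge0.
rewrite setTI esum_set1 ?lee_fin ?normc_ge0 // esum1 ?adde0 ?ltry // => t [_ /= tx].
by rewrite h ?Normc.normc0 //; apply/eqP => ex; exact: tx.
Qed.

Lemma csum_ext D u v : (forall x, D x -> u x = v x) -> csum D u = csum D v.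
Proof.
move=> e; apply: cplx_eq => /=; apply: rsum_ext => x Dx; by rewrite e.
Qed.

Lemma csum_add D u v : csumbl D u -> csumbl D v ->
  csum D (fun x => u x + v x) = csum D u + csum D v.
Proof.
move=> su sv; apply: cplx_eq; rewrite ?ReD ?ImD /=.
  rewrite (rsum_ext (v := fun x => complex.Re (u x) + complex.Re (v x))); last by move=> *; rewrite ReD.
  by rewrite rsum_add //; apply: csumbl_Re.
rewrite (rsum_ext (v := fun x => complex.Im (u x) + complex.Im (v x))); last by move=> *; rewrite ImD.
by rewrite rsum_add //; apply: csumbl_Im.
Qed.

Lemma csum_scale D u c : csumbl D u -> csum D (fun x => c * u x) = c * csum D u.
Proof.
move=> su; have sr := csumbl_Re su; have si := csumbl_Im su.
apply: cplx_eq; rewrite ?ReM ?ImM /=.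
  rewrite (rsum_ext (v := fun x => complex.Re c * complex.Re (u x) - complex.Im c * complex.Im (u x))); last by move=> *; rewrite ReM.
  by rewrite rsum_sub ?rsum_scale //; apply: sumblZ.
rewrite (rsum_ext (v := fun x => complex.Re c * complex.Im (u x) + complex.Im c * complex.Re (u x))); last by move=> *; rewrite ImM.
by rewrite rsum_add ?rsum_scale //; apply: sumblZ.
Qed.

Lemma csum_scaler D u c : csumbl D u -> csum D (fun x => u x * c) = csum D u * c.
Proof.
move=> su; rewrite mulrC -csum_scale //; apply: csum_ext => x _; exact: mulrC.
Qed.

Lemma csum_neg D u : csumbl D u -> csum D (fun x => - u x) = - csum D u.
Proof.
move=> su; rewrite -mulN1r -csum_scale //; apply: csum_ext => x _; by rewrite mulN1r.
Qed.

Lemma csum_sub D u v : csumbl D u -> csumbl D v ->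
  csum D (fun x => u x - v x) = csum D u - csum D v.
Proof.
by move=> su sv; rewrite csum_add ?csum_neg //; apply: csumblN.
Qed.

Lemma csum0 D : csum D (fun _ => 0 : C) = 0.
Proof. by apply: cplx_eq => /=; rewrite rsum0. Qed.

Lemma csum_reindex (T' : choiceType) (P : set T') (Q : set T) (e : T' -> T) u :
  set_bij P Q e -> csum Q u = csum P (fun x => u (e x)).
Proof. by move=> b; apply: cplx_eq => /=; rewrite (rsum_reindex _ b). Qed.

Lemma csum_mkcond D u : (forall x, ~ D x -> u x = 0) -> csum D u = csum [set: T] u.
Proof. by move=> h; apply: cplx_eq => /=; rewrite rsum_mkcond // => x /h ->. Qed.

Lemma csum_single u x : (forall t, t != x -> u t = 0) -> csum [set: T] u = u x.
Proof.
move=> h; apply: cplx_eq => /=; rewrite (rsum_single (x := x)) // => t /h ->//.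
Qed.

Lemma csum_part (Z : choiceType) D u (k : T -> Z) : csumbl D u ->
  csum D u = csum [set: Z] (fun z => csum (D `&` (fun x => k x = z)) u).
Proof.
move=> su; apply: cplx_eq => /=; rewrite (rsum_part k) //; [exact: csumbl_Re|exact: csumbl_Im].
Qed.

Lemma Re_csum_le D u : csumbl D u ->
  `|complex.Re (csum D u)| <= fine (\esum_(x in D) (normc (u x))%:E)%E.
Proof.
move=> su /=; apply: le_trans (rsum_abs (csumbl_Re su)) _.
apply: fine_le.
- by apply: esum_fin_lt (csumbl_Re su) => *; rewrite normr_ge0.
- by apply: esum_fin_lt su => *; rewrite normc_ge0.
- by apply: le_esum => x _; rewrite lee_fin Re_le.
Qed.

Lemma Im_csum_le D u : csumbl D u ->
  `|complex.Im (csum D u)| <= fine (\esum_(x in D) (normc (u x))%:E)%E.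
Proof.
move=> su /=; apply: le_trans (rsum_abs (csumbl_Im su)) _.
apply: fine_le.
- by apply: esum_fin_lt (csumbl_Im su) => *; rewrite normr_ge0.
- by apply: esum_fin_lt su => *; rewrite normc_ge0.
- by apply: le_esum => x _; rewrite lee_fin Im_le.
Qed.

Lemma normc_csum_le D u : csumbl D u ->
  normc (csum D u) <= 2 * fine (\esum_(x in D) (normc (u x))%:E)%E.
Proof.
move=> su; apply: le_trans (normc_le _) _.
have := Re_csum_le su; have := Im_csum_le su; lra.
Qed.

End CS.
Set Implicit Arguments. Unset Strict Implicit. Unset Printing Implicit Defensive.
Local Open Scope ring_scope.

Definition stream := nat -> bool.
Fixpoint pref (w : word) (y : stream) : bool :=
  match w with [::] => true | b :: w' => (y 0%N == b) && pref w' (fun n => y n.+1) end.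
Definition shift (k : nat) (y : stream) : stream := fun n => y (n + k)%N.
Definition scat (w : word) (y : stream) : stream :=
  fun n => if (n < size w)%N then nth false w n else y (n - size w)%N.

Lemma shift0 y : shift 0 y = y.
Proof. by apply: boolp.funext => n; rewrite /shift addn0. Qed.

Lemma scat_nil y : scat [::] y = y.
Proof. by apply: boolp.funext => n; rewrite /scat /= subn0. Qed.

Lemma shift_scat w y : shift (size w) (scat w y) = y.
Proof.
apply: boolp.funext => n; rewrite /shift /scat.
by rewrite ltnNge leq_addl /= addnK.
Qed.

Lemma shift_shift m n y : shift m (shift n y) = shift (n + m) y.
Proof. by apply: boolp.funext => k; rewrite /shift -addnA (addnC m). Qed.

Lemma scat_cat a b y : scat (a ++ b) y = scat a (scat b y).
Proof.
apply: boolp.funext => n; rewrite /scat nth_cat size_cat.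
have [h1|h1] := ltnP n (size a).
  by rewrite (_ : (n < size a + size b)%N = true) //; lia.
have [h2|h2] := ltnP (n - size a) (size b).
  by rewrite (_ : (n < size a + size b)%N = true) //; lia.
by rewrite (_ : (n < size a + size b)%N = false) ?subnDA //; lia.
Qed.

Lemma scat_tail c a y : (fun n => scat (c :: a) y n.+1) = scat a y.
Proof. by apply: boolp.funext => n; rewrite /scat /= ltnS subSS. Qed.

Lemma pref_cat a b y : pref (a ++ b) y = pref a y && pref b (shift (size a) y).
Proof.
elim: a y => [|c a IH] y /=; first by rewrite shift0.
rewrite IH andbA; congr (_ && pref b _).
by apply: boolp.funext => n; rewrite /shift addnS.
Qed.

Lemma pref_scat a y : pref a (scat a y).
Proof.
elim: a y => [|c a IH] y //=; rewrite scat_tail IH andbT.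
by rewrite /scat /=.
Qed.

Lemma pref_scat_incomp a b z : ~~ prefix a b -> ~~ prefix b a -> pref a (scat b z) = false.
Proof.
elim: a b => [|c a IH] [|d b] //=; rewrite ?prefix0s // => h1 h2.
rewrite scat_tail.
have -> : scat [:: d & b] z 0 = d by [].
case: eqP => [ed|] //=; subst d; apply: IH.
  by move: h1; rewrite ?prefix_cons eqxx.
by move: h2; rewrite ?prefix_cons eqxx.
Qed.

Section Act.
Variable R : realType.
Local Notation C := R[i].

Definition act (t : cu2) (phi : stream -> C) (y : stream) : C :=
  if pref t.1 y then phi (scat t.2 (shift (size t.1) y)) else 0.

Lemma act_comp x w phi y : act x (act w phi) y =
  match cu2_mul x w with Some z => act z phi y | None => 0 end.
Proof.
case: x => mu nu; case: w => al be; rewrite /cu2_mul /act /=.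
case: (boolP (prefix nu al)) => [/prefixP [ga ->]|h1].
  rewrite drop_size_cat // pref_cat pref_scat /= shift_scat pref_cat.
  rewrite size_cat -shift_shift shift_scat shift_shift size_cat.
  by case: (pref mu y).
case: (boolP (prefix al nu)) => [/prefixP [ga ->]|h2].
  rewrite drop_size_cat // scat_cat pref_scat shift_scat scat_cat.
  by case: (pref mu y).
by rewrite pref_scat_incomp //; case: (pref mu y).
Qed.

Lemma act_e phi y : act cu2_e phi y = phi y.
Proof. by rewrite /act /cu2_e /cu2_sstar /= shift0 ?scat_nil. Qed.

Lemma act_proj b phi y : act (cu2_proj [:: b]) phi y = if y 0%N == b then phi y else 0.
Proof.
rewrite /act /cu2_proj /= andbT; case: eqP => // <-; congr phi.
apply: boolp.funext => n; rewrite /scat /shift /=.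
by case: n => [|n] //=; rewrite subn1 addn1.
Qed.

Lemma act_sstar w phi y : act (cu2_sstar w) phi y = phi (scat w y).
Proof. by rewrite /act /cu2_e /cu2_sstar /= shift0 ?scat_nil. Qed.

Lemma act0 t y : act t (fun _ => 0) y = 0.
Proof. by rewrite /act; case: ifP. Qed.

End Act.
Set Implicit Arguments. Unset Strict Implicit. Unset Printing Implicit Defensive.
Local Open Scope classical_set_scope.
Local Open Scope ring_scope.

Section Main.
Variable R : realType.
Local Notation C := R[i].
Local Notation normc := (@Normc.normc R).

Definition bnd (phi : stream -> C) := exists B, forall y, normc (phi y) <= B.
Definition pair (g : cu2 -> C) (phi : stream -> C) (y : stream) : C :=
  csum [set: cu2] (fun t => g t * act t phi y).
Definition Iset : set (cu2 -> C) :=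
  [set g | l1 g /\ forall phi, bnd phi -> forall y, pair g phi y = 0].

Lemma l1E (g : cu2 -> C) : l1 g = csumbl [set: cu2] g.
Proof. by []. Qed.

Lemma act_bnd (phi : stream -> C) B t y : (forall y, normc (phi y) <= B) ->
  normc (act t phi y) <= B.
Proof.
move=> h; rewrite /act; case: ifP => _ //.
by rewrite Normc.normc0; apply: le_trans (h y); apply: normc_ge0.
Qed.

Lemma bnd_ge0 (phi : stream -> C) B : (forall y, normc (phi y) <= B) -> 0 <= B.
Proof. by move=> h; apply: le_trans (h (fun _ => false)); apply: normc_ge0. Qed.

Lemma esum_fin_mul (T : choiceType) (D : set T) (a : T -> C) B : 0 <= B ->
  csumbl D a -> (\esum_(x in D) (B * normc (a x))%:E < +oo)%E.
Proof.
move=> B0 sa; rewrite esumZ //; last by move=> x; apply: normc_ge0.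
by apply: lte_mul_pinfty => //; rewrite lee_fin.
Qed.

Lemma csumbl_mulbnd (T : choiceType) (D : set T) (a : T -> C) (f : T -> C) B :
  0 <= B -> (forall x, D x -> normc (f x) <= B) -> csumbl D a -> csumbl D (fun x => a x * f x).
Proof.
move=> B0 hf sa; apply: (@csumbl_bnd _ _ _ _ (fun x => B * normc (a x))); last exact: esum_fin_mul.
move=> x Dx; rewrite Normc.normcM mulrC; apply: ler_wpM2r; [exact: normc_ge0|exact: hf].
Qed.

Lemma csumbl_pair g phi B y : l1 g -> (forall y, normc (phi y) <= B) ->
  csumbl [set: cu2] (fun t => g t * act t phi y).
Proof.
move=> lg hB; apply: csumbl_mulbnd (bnd_ge0 hB) _ lg => t _; exact: act_bnd.
Qed.

Lemma fine_esum_mul (T : choiceType) (D : set T) (a : T -> C) B : 0 <= B -> csumbl D a ->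
  fine (\esum_(x in D) (B * normc (a x))%:E)%E = B * fine (\esum_(x in D) (normc (a x))%:E)%E.
Proof.
move=> B0 sa; rewrite esumZ //; last by move=> x; apply: normc_ge0.
rewrite fineM //; apply: esum_fin_lt sa => *; exact: normc_ge0.
Qed.

Lemma csum_bnd_le (T : choiceType) (D : set T) (a : T -> C) (f : T -> C) B :
  0 <= B -> (forall x, D x -> normc (f x) <= B) -> csumbl D a ->
  fine (\esum_(x in D) (normc (a x * f x))%:E)%E <= B * fine (\esum_(x in D) (normc (a x))%:E)%E.
Proof.
move=> B0 hf sa; rewrite -fine_esum_mul //; apply: fine_le.
- apply: esum_fin_lt (csumbl_mulbnd B0 hf sa) => *; exact: normc_ge0.
- apply: esum_fin_lt (esum_fin_mul B0 sa) => *; apply: mulr_ge0 => //; exact: normc_ge0.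
- apply: le_esum => x Dx; rewrite lee_fin Normc.normcM mulrC; apply: ler_wpM2r; [exact: normc_ge0|exact: hf].
Qed.

Lemma Re_pair_le g phi B y : l1 g -> (forall y, normc (phi y) <= B) ->
  `|complex.Re (pair g phi y)| <= B * l1norm g.
Proof.
move=> lg hB; apply: le_trans (Re_csum_le (csumbl_pair y lg hB)) _.
by apply: csum_bnd_le => //; [exact: bnd_ge0 hB|move=> t _; exact: act_bnd].
Qed.

Lemma Im_pair_le g phi B y : l1 g -> (forall y, normc (phi y) <= B) ->
  `|complex.Im (pair g phi y)| <= B * l1norm g.
Proof.
move=> lg hB; apply: le_trans (Im_csum_le (csumbl_pair y lg hB)) _.
by apply: csum_bnd_le => //; [exact: bnd_ge0 hB|move=> t _; exact: act_bnd].
Qed.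

Lemma bnd_pair g phi : l1 g -> bnd phi -> bnd (pair g phi).
Proof.
move=> lg [B hB]; exists (2 * (B * l1norm g)) => y.
apply: le_trans (normc_le _) _.
have := Re_pair_le y lg hB; have := Im_pair_le y lg hB; lra.
Qed.

Lemma pair_add g h phi y : l1 g -> l1 h -> bnd phi ->
  pair (fun t => g t + h t) phi y = pair g phi y + pair h phi y.
Proof.
move=> lg lh [B hB]; have s1 := csumbl_pair y lg hB; have s2 := csumbl_pair y lh hB.
rewrite /pair -csum_add //.
by apply: csum_ext => t _; rewrite mulrDl.
Qed.

Lemma pair_sub g h phi y : l1 g -> l1 h -> bnd phi ->
  pair (fun t => g t - h t) phi y = pair g phi y - pair h phi y.
Proof.
move=> lg lh [B hB]; have s1 := csumbl_pair y lg hB; have s2 := csumbl_pair y lh hB.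
rewrite /pair -csum_sub //.
by apply: csum_ext => t _; rewrite mulrBl.
Qed.

Lemma pair_scale c g phi y : l1 g -> bnd phi ->
  pair (fun t => c * g t) phi y = c * pair g phi y.
Proof.
move=> lg [B hB]; have s1 := csumbl_pair y lg hB.
rewrite /pair -csum_scale //.
by apply: csum_ext => t _; rewrite mulrA.
Qed.

Lemma pair0 phi y : pair (fun _ => 0) phi y = 0.
Proof. by rewrite /pair (csum_ext (v := fun _ => 0)) ?csum0 // => t _; rewrite mul0r. Qed.

Lemma pair_phi0 g y : pair g (fun _ => 0) y = 0.
Proof. by rewrite /pair (csum_ext (v := fun _ => 0)) ?csum0 // => t _; rewrite act0 mulr0. Qed.

Lemma setXT (T1 T2 : Type) : [set: T1] `*`` (fun _ => [set: T2]) = [set: T1 * T2].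
Proof. by apply/seteqP; split => // -[]. Qed.

Lemma esum_pair_fin (a b : cu2 -> C) : l1 a -> l1 b ->
  (\esum_(p in [set: cu2 * cu2]) (normc (a p.1) * normc (b p.2))%:E < +oo)%E.
Proof.
move=> la lb.
rewrite -setXT -(esum_esum (a := fun x w => (normc (a x) * normc (b w))%:E)); last first.
  by move=> i j _ _; rewrite lee_fin mulr_ge0 // normc_ge0.
have fb := esum_fin_lt (fun x (_ : [set: cu2] x) => normc_ge0 (b x)) lb.
rewrite (eq_esum (b := fun x => ((fine (\esum_(w in [set: cu2]) (normc (b w))%:E)) * normc (a x))%:E)); last first.
  move=> x _; rewrite esumZ; last 2 first.
  - by move=> w; exact: normc_ge0.
  - exact: normc_ge0.
  by rewrite -(fineK fb) -EFinM mulrC.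
apply: esum_fin_mul la; apply: fine_ge0; apply: esum_ge0 => w _; by rewrite lee_fin normc_ge0.
Qed.

Lemma csumbl_prod (a b : cu2 -> C) (f : cu2 * cu2 -> C) B : l1 a -> l1 b -> 0 <= B ->
  (forall p, normc (f p) <= B) ->
  csumbl [set: cu2 * cu2] (fun p => a p.1 * b p.2 * f p).
Proof.
move=> la lb B0 hf.
apply: (@csumbl_bnd _ _ _ _ (fun p => B * (normc (a p.1) * normc (b p.2)))).
  move=> p _; rewrite !Normc.normcM mulrC; apply: ler_wpM2r => //.
  by apply: mulr_ge0; apply: normc_ge0.
rewrite esumZ //; last by move=> x; apply: mulr_ge0; apply: normc_ge0.
by apply: lte_mul_pinfty; [rewrite lee_fin|by []|exact: esum_pair_fin].
Qed.

Definition Dn : set (cu2 * cu2) := [set p | cu2_mul p.1 p.2 != None].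
Definition kk (p : cu2 * cu2) : cu2 := odflt cu2_e (cu2_mul p.1 p.2).
Definition fib (z : cu2) : set (cu2 * cu2) := [set p | cu2_mul p.1 p.2 = Some z].

Lemma fibE z : Dn `&` (fun p => kk p = z) = fib z.
Proof.
apply/seteqP; split => p /=; rewrite /Dn /kk /fib /=.
  case: (cu2_mul p.1 p.2) => [z'|] [h e] /=; first by rewrite -e.
  by rewrite eqxx in h.
by move=> ->.
Qed.

Lemma l1_conv (a b : cu2 -> C) : l1 a -> l1 b -> l1 (conv a b).
Proof.
move=> la lb.
have sab : csumbl [set: cu2 * cu2] (fun p => a p.1 * b p.2).
  apply: csumbl_le (csumbl_prod la lb ler01 (fun p => _ : normc (1 : C) <= 1)) => [p _|].
    by rewrite mulr1.
  by rewrite Normc.normc1.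
have sfib : forall z, csumbl (fib z) (fun p => a p.1 * b p.2).
  by move=> z; apply: csumbl_sub sab.
have ge0E : forall z, (0 <= \esum_(p in fib z) (normc (a p.1 * b p.2))%:E)%E.
  by move=> z; apply: esum_ge0 => *; rewrite lee_fin normc_ge0.
rewrite l1E /csumbl.
have H1 : (\esum_(z in [set: cu2]) (normc (conv a b z))%:E <=
   \esum_(z in [set: cu2]) (2 * fine (\esum_(p in fib z) (normc (a p.1 * b p.2))%:E))%:E)%E.
  by apply: le_esum => z _; rewrite lee_fin; exact: (normc_csum_le (sfib z)).
apply: le_lt_trans H1 _.
rewrite esumZ //; last by move=> z; rewrite fine_ge0.
apply: lte_mul_pinfty => //.
rewrite (eq_esum (b := fun z => \esum_(p in fib z) (normc (a p.1 * b p.2))%:E)%E); last first.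
  move=> z _; rewrite fineK //; apply: esum_fin_lt (sfib z) => *; exact: normc_ge0.
under eq_esum do rewrite -fibE.
rewrite -esum_part; last by move=> p; rewrite lee_fin normc_ge0.
apply: le_lt_trans sab; apply: esum_sub => // p; by rewrite lee_fin normc_ge0.
Qed.


Lemma pair_conv a b phi y : l1 a -> l1 b -> bnd phi ->
  pair (conv a b) phi y = pair a (pair b phi) y.
Proof.
move=> la lb [B hB]; have B0 := bnd_ge0 hB.
pose H := fun p : cu2 * cu2 => a p.1 * b p.2 * act p.1 (act p.2 phi) y.
have hB2 : forall p : cu2 * cu2, normc (act p.1 (act p.2 phi) y) <= B.
  by move=> p; apply: act_bnd => y'; apply: act_bnd.
have sH : csumbl [set: cu2 * cu2] H := csumbl_prod la lb B0 hB2.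
have sab : csumbl [set: cu2 * cu2] (fun p => a p.1 * b p.2).
  apply: csumbl_le (csumbl_prod la lb ler01 (fun p => _ : normc (1 : C) <= 1)) => [p _|].
    by rewrite mulr1.
  by rewrite Normc.normc1.
have step1 : pair (conv a b) phi y = csum [set: cu2] (fun z => csum (fib z) H).
  rewrite /pair; apply: csum_ext => z _; rewrite /conv -/(fib z).
  rewrite -csum_scaler; last exact: csumbl_sub sab.
  by apply: csum_ext => p hp; rewrite /H act_comp hp.
have step2 : csum [set: cu2] (fun z => csum (fib z) H) = csum Dn H.
  rewrite (csum_part kk); last exact: csumbl_sub sH.
  by apply: csum_ext => z _; rewrite fibE.
have step3 : csum Dn H = csum [set: cu2 * cu2] H.
  apply: csum_mkcond => p; rewrite /Dn /= => /negP; rewrite negbK => /eqP hp.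
  by rewrite /H act_comp hp mulr0.
have step4 : csum [set: cu2 * cu2] H =
    csum [set: cu2] (fun x => csum ([set: cu2 * cu2] `&` (fun p => p.1 = x)) H).
  exact: csum_part.
rewrite step1 step2 step3 step4 /pair; apply: csum_ext => x _.
rewrite (@csum_reindex _ _ _ [set: cu2] _ (fun w => (x, w))); last first.
  split.
  - by move=> w _.
  - by move=> w1 w2 _ _ [].
  - by move=> [x' w] [_ /= ->]; exists w.
have sw : csumbl [set: cu2] (fun w => b w * act x (act w phi) y).
  by apply: csumbl_mulbnd B0 _ lb => w _; apply: act_bnd => y'; apply: act_bnd.
rewrite (csum_ext (v := fun w => a x * (b w * act x (act w phi) y))); last first.
  by move=> w _; rewrite /H /= mulrA.
rewrite csum_scale //; congr (_ * _).
have E : forall w, act x (act w phi) y =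
    if pref x.1 y then act w phi (scat x.2 (shift (size x.1) y)) else 0 by [].
have E2 : act x (pair b phi) y =
    if pref x.1 y then pair b phi (scat x.2 (shift (size x.1) y)) else 0 by [].
rewrite E2; case: ifP => hp.
  by apply: csum_ext => w _; rewrite E hp.
rewrite (csum_ext (v := fun _ => 0)) ?csum0 // => w _; by rewrite E hp mulr0.
Qed.

End Main.
Set Implicit Arguments. Unset Strict Implicit. Unset Printing Implicit Defensive.
Local Open Scope classical_set_scope.
Local Open Scope ring_scope.

Section Fin.
Variable R : realType.
Local Notation C := R[i].
Local Notation normc := (@Normc.normc R).

Lemma small_zero (x B : R) : 0 <= B -> (forall eps, 0 < eps -> `|x| <= B * eps) -> x = 0.
Proof.
move=> B0 h; apply/eqP; apply/negPn/negP => x0.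
have e0 : 0 < `|x| by rewrite normr_gt0.
have B1 : 0 < B + 1 by lra.
have := h (`|x| / (B + 1)) (divr_gt0 e0 B1).
rewrite mulrA ler_pdivlMr // => H.
have : `|x| * (B + 1) <= B * `|x| by [].
nra.
Qed.

Lemma normc_delta s t : normc (delta R s t) = (t == s)%:R.
Proof. by rewrite /delta; case: (t == s); rewrite ?Normc.normc1 ?Normc.normc0. Qed.

Lemma esum_delta s : (\esum_(t in [set: cu2]) (normc (delta R s t))%:E = 1)%E.
Proof.
rewrite (esumID [set s]); last by move=> *; rewrite lee_fin normc_ge0.
rewrite setTI esum_set1 ?lee_fin ?normc_ge0 // esum1 ?adde0.
  by rewrite normc_delta eqxx.
move=> t [_ /= ts]; rewrite normc_delta; case: eqP => // ets; by case: ts.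
Qed.

Lemma l1_delta s : l1 (delta R s).
Proof. by rewrite l1E /csumbl esum_delta ltry. Qed.

Lemma pair_delta s phi y : pair (delta R s) phi y = act s phi y.
Proof.
rewrite /pair (csum_single (x := s)); first by rewrite /delta eqxx mul1r.
by move=> t ts; rewrite /delta (negbTE ts) mul0r.
Qed.

Lemma Iset_closed : closed_ideal (@Iset R).
Proof.
split.
- by move=> g [].
- split.
    split; first by rewrite l1E /csumbl (eq_esum (b := fun _ => 0%E)) ?esum0 ?ltry // => t _; rewrite Normc.normc0.
    by move=> phi _ y; exact: pair0.
  move=> g h [lg pg] [lh ph]; split; first exact: csumblD.
  by move=> phi bp y; rewrite pair_add // pg // ph // addr0.
- move=> c g [lg pg]; split; first exact: csumblZ.
  by move=> phi bp y; rewrite pair_scale // pg // mulr0.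
- move=> a g la [lg pg]; split; split.
  + exact: l1_conv.
  + move=> phi bp y; rewrite pair_conv //.
    rewrite (_ : pair g phi = fun _ => 0) ?pair_phi0 //.
    by apply: boolp.funext => y'; apply: pg.
  + exact: l1_conv.
  + by move=> phi bp y; rewrite pair_conv // pg //; apply: bnd_pair.
- move=> a la happ; split => // phi [B hB] y.
  have B0 := bnd_ge0 hB.
  have key : forall eps, 0 < eps -> `|complex.Re (pair a phi y)| <= B * eps /\
                                    `|complex.Im (pair a phi y)| <= B * eps.
    move=> eps e0; have [g [lg pg] hg] := happ eps e0.
    have lag : l1 (fun t => a t - g t) by apply: csumblB.
    have E : pair a phi y = pair (fun t => a t - g t) phi y.
      by rewrite pair_sub //; [rewrite pg ?subr0 //; exists B|exists B].
    rewrite E; split.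
      apply: le_trans (Re_pair_le y lag hB) _; apply: ler_wpM2l => //; exact: ltW.
    apply: le_trans (Im_pair_le y lag hB) _; apply: ler_wpM2l => //; exact: ltW.
  apply: cplx_eq; rewrite ?Re0 ?Im0.
    by apply: (small_zero B0) => eps /key [].
  by apply: (small_zero B0) => eps /key [].
Qed.

Lemma Iset_f0 : Iset (f0 R).
Proof.
have l12 : l1 (fun t => delta R cu2_e t - delta R (cu2_proj [:: false]) t).
  by apply: csumblB; apply: l1_delta.
split.
  by rewrite /f0; apply: csumblB => //; apply: l1_delta.
move=> phi bp y; rewrite /f0 pair_sub //; last exact: l1_delta.
rewrite pair_sub //; try exact: l1_delta.
rewrite !pair_delta act_e !act_proj.
by case: (y 0%N) => /=; rewrite ?subr0 subrr ?subr0.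
Qed.

End Fin.
Set Implicit Arguments. Unset Strict Implicit. Unset Printing Implicit Defensive.
Local Open Scope classical_set_scope.
Local Open Scope ring_scope.

Section Final.
Variable R : realType.
Local Notation C := R[i].
Local Notation normc := (@Normc.normc R).

Definition fF (F : seq word) : cu2 -> C := fun t => \sum_(w <- F) delta R (cu2_sstar w) t.

Lemma fF_bound F : (\esum_(t in [set: cu2]) (normc (fF F t))%:E <= (size F)%:R%:E)%E.
Proof.
elim: F => [|w F IH].
  rewrite (eq_esum (b := fun _ => 0%E)) ?esum0 // => t _.
  by rewrite /fF big_nil Normc.normc0.
apply: le_trans (_ : (\esum_(t in [set: cu2]) ((normc (delta R (cu2_sstar w) t))%:E + (normc (fF F t))%:E) <= _)%E).
  by apply: le_esum => t _; rewrite /fF big_cons -EFinD lee_fin le_normcD.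
rewrite esumD; try by move=> *; rewrite lee_fin normc_ge0.
rewrite esum_delta /= -[X in (_ <= X)%E]/(((size F).+1)%:R%:E) mulrS EFinD.
by apply: leeD.
Qed.

Lemma fF_l1 F : l1 (fF F).
Proof. by rewrite l1E /csumbl; apply: le_lt_trans (fF_bound F) _; rewrite ltry. Qed.

Lemma fF_norm F : l1norm (fF F) <= (size F)%:R.
Proof.
rewrite /l1norm -[X in _ <= X]/(fine ((size F)%:R%:E)); apply: fine_le => //.
- by apply: esum_fin_lt (fF_l1 F) => *; exact: normc_ge0.
- exact: fF_bound.
Qed.

Lemma pair_ext (g h : cu2 -> C) (phi : stream -> C) y : (forall t, g t = h t) -> pair g phi y = pair h phi y.
Proof. by move=> e; rewrite /pair; apply: csum_ext => t _; rewrite e. Qed.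

Lemma bnd1 : bnd (fun _ : stream => 1 : C).
Proof. by exists 1 => _; rewrite Normc.normc1. Qed.

Lemma fF_pair F y : complex.Re (pair (fF F) (fun _ => 1) y) = (size F)%:R.
Proof.
elim: F => [|w F IH].
  by rewrite (@pair_ext _ (fun _ => 0)) ?pair0 // => t; rewrite /fF big_nil.
rewrite (@pair_ext _ (fun t => delta R (cu2_sstar w) t + fF F t)); last first.
  by move=> t; rewrite /fF big_cons.
rewrite pair_add //; [|exact: l1_delta|exact: fF_l1|exact: bnd1].
by rewrite ReD IH pair_delta act_sstar /= mulrS.
Qed.

End Final.

Theorem proposition3p19 (R : realType) (F : seq word) :
  uniq F -> [::] \notin F ->
  quot_norm (fun t : cu2 => \sum_(w <- F) delta R (cu2_sstar w) t)
  = (size F)%:R.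
Proof.
move=> _ _; rewrite -/(@fF R F) /quot_norm.
set S := [set l1norm (fun t => @fF R F t - g t) | g in @Jideal R].
have J0 : @Jideal R (fun _ => 0).
  by move=> I [_ [h0 _] _ _ _] _; exact: h0.
have JI : forall g, @Jideal R g -> Iset g.
  by move=> g hg; apply: hg; [exact: Iset_closed|exact: Iset_f0].
have lb : lbound S (size F)%:R.
  move=> _ [g hg <-]; have [lg pg] := JI g hg.
  have lh : l1 (fun t => @fF R F t - g t) by apply: csumblB => //; exact: fF_l1.
  have hB1 : forall y : stream, Normc.normc ((fun _ : stream => 1 : R[i]) y) <= 1.
    by move=> _; rewrite Normc.normc1.
  have := Re_pair_le (fun _ => false) lh hB1.
  rewrite pair_sub //; [|exact: fF_l1|exact: bnd1].
  rewrite pg; last exact: bnd1.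
  rewrite subr0 fF_pair mul1r => H; apply: le_trans H; exact: ler_norm.
have S0 : S (l1norm (fun t => @fF R F t - 0)) by exists (fun _ => 0).
apply/eqP; rewrite eq_le; apply/andP; split.
  apply: le_trans (ge_inf _ S0) _; first by exists (size F)%:R.
  rewrite (_ : (fun t => @fF R F t - 0) = @fF R F); first exact: fF_norm.
  by apply: boolp.funext => t; rewrite subr0.
by apply: lb_le_inf => //; exists (l1norm (fun t => @fF R F t - 0)).
Qed.
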